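(* Let $(G,* )$ be a metrizable topological group. The following are equivalent: (1) $G$ has the property ${\sf Smirnov}$-${\sf S}_c(\mathcal{O}_{\sf nbd},\mathcal{O})$; (2) $G$ has the finitary Haver property with respect to every left-invariant metric on $G$ compatible with the topology of $G$.
   Context: For a topological group $(G,* )$ with identity $e$ and a neighborhood $U$ of $e$, let $\mathcal{O}(U)=\{x*U: x\in G\}$ and $\mathcal{O}_{\sf nbd}=\{\mathcal{O}(U): U \text{ a neighborhood of } e\}$. $\mathcal{O}$ denotes the collection of all open covers of $G$. A family $\mathcal{B}$ refines $\mathcal{A}$ if every member of $\mathcal{B}$ is contained in some member of $\mathcal{A}$. ${\sf Smirnov}$-${\sf S}_c(\mathcal{A},\mathcal{B})$ is the statement: for each sequence $(A_n:n<\infty)$ of elements of $\mathcal{A}$ there exist a positive integer $k$ and a sequence $(B_n:n\le k)$ where each $B_n$ is a pairwise disjoint family of open sets refining $A_n$, such that $\bigcup_{n\le k}B_n\in\mathcal{B}$. A metrizable space $X$ is finitary Haver with respect to a metric $d$ if for each sequence $(\epsilon_n:n<\infty)$ of positive reals there exist a positive integer $k$ and a sequence $(\mathcal{V}_n:n\le k)$ where each $\mathcal{V}_n$ is a pairwise disjoint family of open sets each of $d$-diameter less than $\epsilon_n$, such that $\bigcup_{n\le k}\mathcal{V}_n$ covers $X$. A metric $d$ on $G$ is left-invariant if $d(g*x,g*y)=d(x,y)$ for all $g,x,y$. *)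

(* Defs.v *)
From Stdlib Require Import Reals.
Open Scope R_scope.

Definition set (G : Type) := G -> Prop.

Definition is_topology {G : Type} (T : set G -> Prop) : Prop :=
  T (fun _ => True) /\
  T (fun _ => False) /\
  (forall U V, T U -> T V -> T (fun x => U x /\ V x)) /\
  (forall F : set G -> Prop, (forall U, F U -> T U) ->
     T (fun x => exists U, F U /\ U x)).

Definition is_topological_group {G : Type} (op : G -> G -> G) (inv : G -> G)
    (e : G) (T : set G -> Prop) : Prop :=
  (forall x y z, op (op x y) z = op x (op y z)) /\
  (forall x, op e x = x) /\ (forall x, op x e = x) /\
  (forall x, op (inv x) x = e) /\ (forall x, op x (inv x) = e) /\
  is_topology T /\
  (* continuity of multiplication G x G -> G (product topology) *)
  (forall W, T W -> forall x y, W (op x y) ->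
     exists U V, T U /\ T V /\ U x /\ V y /\
       (forall a b, U a -> V b -> W (op a b))) /\
  (forall W, T W -> T (fun x => W (inv x))).

Definition is_metric {G : Type} (d : G -> G -> R) : Prop :=
  (forall x y, 0 <= d x y) /\
  (forall x y, d x y = 0 <-> x = y) /\
  (forall x y, d x y = d y x) /\
  (forall x y z, d x z <= d x y + d y z).

Definition metric_open {G : Type} (d : G -> G -> R) (U : set G) : Prop :=
  forall x, U x -> exists eps, 0 < eps /\ forall y, d x y < eps -> U y.

Definition compatible {G : Type} (d : G -> G -> R) (T : set G -> Prop) : Prop :=
  forall U, T U <-> metric_open d U.

Definition metrizable {G : Type} (T : set G -> Prop) : Prop :=
  exists d : G -> G -> R, is_metric d /\ compatible d T.

Definition left_invariant {G : Type} (op : G -> G -> G) (d : G -> G -> R) : Prop :=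
  forall g x y, d (op g x) (op g y) = d x y.

Definition ltrans {G : Type} (op : G -> G -> G) (x : G) (U : set G) : set G :=
  fun z => exists u, U u /\ z = op x u.

Definition family (G : Type) := set G -> Prop.

Definition open_family {G : Type} (T : set G -> Prop) (B : family G) : Prop :=
  forall V, B V -> T V.

(* distinct members are disjoint (distinct = extensionally different) *)
Definition pairwise_disjoint {G : Type} (B : family G) : Prop :=
  forall V W, B V -> B W -> (exists z, V z /\ W z) -> forall y, V y <-> W y.

Definition refines {G : Type} (B A : family G) : Prop :=
  forall V, B V -> exists W, A W /\ forall z, V z -> W z.

Definition O_of {G : Type} (op : G -> G -> G) (U : set G) : family G :=
  fun W => exists x, W = ltrans op x U.

Definition nbd_e {G : Type} (T : set G -> Prop) (e : G) (U : set G) : Prop :=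
  T U /\ U e.

Definition Smirnov_Sc_Onbd_O {G : Type} (op : G -> G -> G) (e : G)
    (T : set G -> Prop) : Prop :=
  forall U : nat -> set G, (forall n, nbd_e T e (U n)) ->
    exists (k : nat) (B : nat -> family G),
      (forall n, (n <= k)%nat ->
         open_family T (B n) /\ pairwise_disjoint (B n) /\
         refines (B n) (O_of op (U n))) /\
      (forall g, exists n, (n <= k)%nat /\ exists V, B n V /\ V g).

Definition diam_lt {G : Type} (d : G -> G -> R) (V : set G) (eps : R) : Prop :=
  exists r, r < eps /\ forall x y, V x -> V y -> d x y <= r.

Definition finitary_Haver {G : Type} (T : set G -> Prop) (d : G -> G -> R) : Prop :=
  forall eps : nat -> R, (forall n, 0 < eps n) ->
    exists (k : nat) (V : nat -> family G),
      (forall n, (n <= k)%nat ->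
         open_family T (V n) /\ pairwise_disjoint (V n) /\
         (forall W, V n W -> diam_lt d W (eps n))) /\
      (forall g, exists n, (n <= k)%nat /\ exists W, V n W /\ W g).

(* Main.v *)
Require Import Defs.
From Stdlib Require Import Reals Lra Lia List Classical ClassicalEpsilon FunctionalExtensionality PropExtensionality.
Import ListNotations.
Open Scope R_scope.

Definition lprod {G} (op : G->G->G) (e:G) (l : list (G*nat)) : G :=
  fold_right (fun p acc => op (fst p) acc) e l.
Definition lcost {G} (l : list (G*nat)) : R :=
  fold_right (fun p acc => (/2)^(snd p) + acc) 0 l.
Definition lvalid {G} (V : nat -> set G) (l : list (G*nat)) : Prop :=
  Forall (fun p => V (snd p) (fst p)) l.

Lemma lprod_app {G} (op : G->G->G) e
  (assoc : forall x y z, op (op x y) z = op x (op y z)) (idl : forall x, op e x = x) l1 l2 :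
  lprod op e (l1++l2) = op (lprod op e l1) (lprod op e l2).
Proof. induction l1; simpl; [rewrite idl; auto | rewrite IHl1, assoc; auto]. Qed.

Lemma lcost_app {G} (l1 l2 : list (G*nat)) : lcost (l1++l2) = lcost l1 + lcost l2.
Proof. induction l1; simpl; [lra| rewrite IHl1; lra]. Qed.

Lemma half_pow_pos n : 0 < (/2)^n.
Proof. apply pow_lt; lra. Qed.

Lemma half_pow_S n : (/2)^(S n) = (/2)^n / 2.
Proof. simpl; field. Qed.

Lemma lcost_nonneg {G} (l : list (G*nat)) : 0 <= lcost l.
Proof. induction l; simpl; [lra| pose proof half_pow_pos (snd a); lra]. Qed.

Lemma half_pow_mono m n : (m <= n)%nat -> (/2)^n <= (/2)^m.
Proof.
  induction 1; [lra|]. rewrite half_pow_S. pose proof half_pow_pos m0; lra.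
Qed.

Lemma half_pow_lt_nat m n : (/2)^m < (/2)^n -> (n < m)%nat.
Proof.
  intros H. destruct (Nat.lt_ge_cases n m); auto. exfalso.
  pose proof (half_pow_mono m n H0). lra.
Qed.

Lemma small_pow eps : 0 < eps -> exists n, (/2)^n < eps.
Proof.
  intros He. destruct (pow_lt_1_zero (/2)) with (y := eps) as [N HN]; auto.
  - rewrite Rabs_pos_eq; lra.
  - exists N. specialize (HN N (le_n N)). rewrite Rabs_pos_eq in HN; auto.
    left; apply half_pow_pos.
Qed.

Lemma split_cost {G} (l : list (G*nat)) (t : R) : 0 < t -> t <= lcost l ->
  exists l1 x l2, l = l1 ++ x :: l2 /\ lcost l1 < t /\ t <= lcost l1 + (/2)^(snd x).
Proof.
  revert t; induction l as [|y l IH]; intros t Ht Hle; simpl in Hle.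
  - lra.
  - destruct (Rle_lt_dec t ((/2)^(snd y))) as [H|H].
    + exists [], y, l. simpl. split; [auto| lra].
    + destruct (IH (t - (/2)^(snd y))) as [l1 [x [l2 [E [H1 H2]]]]]; try lra.
      exists (y::l1), x, l2. subst. simpl. split; [auto| lra].
Qed.

Lemma frink {G} (op : G->G->G) (e:G) (V : nat -> set G)
  (assoc : forall x y z, op (op x y) z = op x (op y z)) (idl : forall x, op e x = x)
  (idr : forall x, op x e = x)
  (He : forall n, V n e)
  (Hmono : forall n x, V (S n) x -> V n x)
  (H3 : forall n a b c, V (S n) a -> V (S n) b -> V (S n) c -> V n (op a (op b c))) :
  forall l, lvalid V l -> forall n, lcost l < (/2)^n -> V n (lprod op e l).
Proof.
  assert (Hmono' : forall m n x, (n <= m)%nat -> V m x -> V n x).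
  { intros m n x Hnm; induction Hnm; auto. }
  intros l. remember (length l) as k. assert (Hk: (length l <= k)%nat) by lia. clear Heqk.
  revert l Hk. induction k as [|k IH]; intros l Hk Hv n Hc.
  - destruct l; simpl in Hk; [simpl; apply He | lia].
  - destruct (Rlt_le_dec (lcost l) ((/2)^(S n))) as [Hs|Hs].
    + destruct l as [|y l'].
      * simpl; apply He.
      * inversion Hv; subst. simpl in Hk.
        change (lcost (y::l')) with ((/2)^(snd y) + lcost l') in Hs.
        change (lprod op e (y::l')) with (op (fst y) (lprod op e l')).
        pose proof (lcost_nonneg l'). pose proof (half_pow_pos (snd y)).
        assert (Hy: (S n < snd y)%nat) by (apply half_pow_lt_nat; lra).
        assert (V (S n) (fst y)) by (apply (Hmono' (snd y)); [lia|auto]).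
        assert (V (S n) (lprod op e l')) by (apply IH; [lia|auto|lra]).
        rewrite <- (idr (lprod op e l')). apply H3; auto.
    + destruct (split_cost l ((/2)^(S n))) as [l1 [x [l2 [E [H1 H2]]]]];
        [apply half_pow_pos|auto|].
      subst l.
      rewrite lcost_app in Hc.
      change (lcost (x::l2)) with ((/2)^(snd x) + lcost l2) in Hc.
      unfold lvalid in Hv; apply Forall_app in Hv; destruct Hv as [Hv1 Hv2].
      inversion Hv2; subst.
      rewrite length_app in Hk; simpl in Hk.
      pose proof (lcost_nonneg l1). pose proof (lcost_nonneg l2).
      pose proof (half_pow_S n). pose proof (half_pow_pos (snd x)).
      rewrite lprod_app; auto.
      change (lprod op e (x::l2)) with (op (fst x) (lprod op e l2)).
      apply H3.
      * apply IH; auto; lia.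
      * apply (Hmono' (snd x)); auto.
        assert ((n < snd x)%nat) by (apply half_pow_lt_nat; lra). lia.
      * apply IH; auto; [lia| lra].
Qed.
Lemma open_of_local {G} (T : set G -> Prop) (HT : is_topology T) (U : set G) :
  (forall x, U x -> exists W, T W /\ W x /\ (forall z, W z -> U z)) -> T U.
Proof.
  intros H. destruct HT as [_ [_ [_ Hu]]].
  specialize (Hu (fun W => T W /\ forall z, W z -> U z) (fun W HW => proj1 HW)).
  replace U with (fun x => exists W, (T W /\ forall z, W z -> U z) /\ W x); auto.
  apply functional_extensionality; intros x; apply propositional_extensionality; split.
  - intros [W [[_ HW] Hx]]; auto.
  - intros Hx. destruct (H x Hx) as [W [HW [Wx HWU]]]. exists W; auto.
Qed.

Lemma open_ltrans {G} op inv (e:G) T (HG : is_topological_group op inv e T) c A :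
  T A -> T (fun y => A (op c y)).
Proof.
  intros HA. pose proof HG as [_ [_ [_ [_ [_ [HT [Hc _]]]]]]].
  apply open_of_local; auto. intros y Hy.
  destruct (Hc A HA c y Hy) as [P [Q [_ [HQ [Pc [Qy HPQ]]]]]].
  exists Q; repeat split; auto.
Qed.

Lemma open_rtrans {G} op inv (e:G) T (HG : is_topological_group op inv e T) c A :
  T A -> T (fun y => A (op y c)).
Proof.
  intros HA. pose proof HG as [_ [_ [_ [_ [_ [HT [Hc _]]]]]]].
  apply open_of_local; auto. intros y Hy.
  destruct (Hc A HA y c Hy) as [P [Q [HP [_ [Py [Qc HPQ]]]]]].
  exists P; repeat split; auto.
Qed.

Lemma open_inter {G} (T : set G -> Prop) (HT : is_topology T) A B :
  T A -> T B -> T (fun x => A x /\ B x).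
Proof. destruct HT as [_ [_ [Hi _]]]; auto. Qed.

Lemma ball_open {G} (d : G -> G -> R) (Hd : is_metric d) (c : G) r :
  metric_open d (fun x => d c x < r).
Proof.
  destruct Hd as [_ [_ [_ Htri]]].
  intros x Hx. exists (r - d c x); split; [lra|].
  intros y Hy. pose proof (Htri c x y); lra.
Qed.

Lemma sq_root {G} op inv (e:G) T (HG : is_topological_group op inv e T) W :
  T W -> W e -> exists W1, T W1 /\ W1 e /\ forall a b, W1 a -> W1 b -> W (op a b).
Proof.
  intros HW We. pose proof HG as [_ [idl [_ [_ [_ [HT [Hc _]]]]]]].
  assert (W (op e e)) by (rewrite idl; auto).
  destruct (Hc W HW e e H) as [P [Q [HP [HQ [Pe [Qe HPQ]]]]]].
  exists (fun x => P x /\ Q x); repeat split; auto.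
  - apply open_inter; auto.
  - intros a b [Pa _] [_ Qb]; auto.
Qed.

Lemma nbd_base {G} op inv (e:G) T (HG : is_topological_group op inv e T) (d0 : G->G->R)
  (Hd0 : is_metric d0) (Hc : compatible d0 T) :
  exists V : nat -> set G,
    (forall n, T (V n)) /\ (forall n, V n e) /\ (forall x, V 0%nat x) /\
    (forall n x, V (S n) x -> V n x) /\
    (forall n a b c, V (S n) a -> V (S n) b -> V (S n) c -> V n (op a (op b c))) /\
    (forall g, (forall n, V n g) -> g = e) /\
    (forall B, T B -> B e -> exists n, forall x, V n x -> B x).
Proof.
  pose proof HG as [assoc [idl [idr [_ [_ [HT _]]]]]].
  assert (step : forall (n : nat) (W : set G), exists W',
    (T W /\ W e) -> T W' /\ W' e /\ (forall a b c, W' a -> W' b -> W' c -> W (op a (op b c)))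
      /\ (forall x, W' x -> d0 e x < (/2)^n)).
  { intros n W. destruct (classic (T W /\ W e)) as [[HW We]|Hn]; [|exists W; tauto].
    destruct (sq_root op inv e T HG W HW We) as [W1 [HW1 [W1e H1]]].
    destruct (sq_root op inv e T HG W1 HW1 W1e) as [W2 [HW2 [W2e H2]]].
    exists (fun x => W2 x /\ d0 e x < (/2)^n). intros _. repeat split.
    - apply open_inter; auto. apply Hc. apply ball_open; auto.
    - auto.
    - destruct Hd0 as [_ [H0 _]]. assert (d0 e e = 0) by (apply H0; auto).
      rewrite H. apply half_pow_pos.
    - intros a b c [Wa _] [Wb _] [Wc _]. apply H1; auto.
      rewrite <- (idr a). apply H2; auto.
    - intros x [_ Hx]; auto. }
  assert (f : {f : nat -> set G -> set G | forall n W, (T W /\ W e) -> T (f n W) /\ f n W e /\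
     (forall a b c, f n W a -> f n W b -> f n W c -> W (op a (op b c))) /\
     (forall x, f n W x -> d0 e x < (/2)^n)}).
  { exists (fun n W => proj1_sig (constructive_indefinite_description _ (step n W))).
    intros n W. exact (proj2_sig (constructive_indefinite_description _ (step n W))). }
  destruct f as [f Hf].
  set (V := fix V (n : nat) : set G := match n with O => fun _ => True | S m => f m (V m) end).
  assert (HVo : forall n, T (V n) /\ V n e).
  { induction n; simpl.
    - split; [apply HT| exact I].
    - destruct (Hf n (V n) IHn) as [A [B _]]; auto. }
  assert (H3 : forall n a b c, V (S n) a -> V (S n) b -> V (S n) c -> V n (op a (op b c))).
  { intros n. apply (Hf n (V n) (HVo n)). }
  assert (Hball : forall n x, V (S n) x -> d0 e x < (/2)^n).
  { intros n. apply (Hf n (V n) (HVo n)). }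
  exists V. split; [|split; [|split; [|split; [|split; [|split]]]]].
  - apply HVo.
  - apply HVo.
  - intros x; exact I.
  - intros n x Hx. rewrite <- (idr x), <- (idr e). apply H3; auto; apply HVo.
  - exact H3.
  - intros g Hg. destruct Hd0 as [Hpos [H0 _]].
    destruct (Rle_lt_dec (d0 e g) 0) as [Hle|Hlt].
    + symmetry; apply H0. pose proof (Hpos e g); lra.
    + destruct (small_pow _ Hlt) as [n Hn]. specialize (Hball n g (Hg (S n))). lra.
  - intros B HB Be. apply Hc in HB. destruct (HB e Be) as [eps [Heps Hb]].
    destruct (small_pow _ Heps) as [n Hn]. exists (S n). intros x Hx.
    apply Hb. specialize (Hball n x Hx). lra.
Qed.
Lemma N_exists {G} (op : G->G->G) (e:G) (V : nat -> set G) (HV0 : forall x, V 0%nat x)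
  (idr : forall x, op x e = x) :
  exists N : G -> R,
    (forall g l, lvalid V l -> lprod op e l = g -> N g <= lcost l) /\
    (forall g c, N g < c -> exists l, lvalid V l /\ lprod op e l = g /\ lcost l < c).
Proof.
  set (S g := fun r => exists l, lvalid V l /\ lprod op e l = g /\ r = - lcost l).
  assert (Hl : forall g, exists m, is_lub (S g) m).
  { intros g. destruct (completeness (S g)) as [m Hm].
    - exists 0. intros r [l [_ [_ ->]]]. pose proof (lcost_nonneg l); lra.
    - exists (- lcost [(g,0%nat)]). exists [(g,0%nat)]. split; [|split; auto].
      + constructor; [apply HV0| constructor].
      + simpl. apply idr.
    - exists m; auto. }
  exists (fun g => - proj1_sig (constructive_indefinite_description _ (Hl g))).
  split.
  - intros g l Hv Hp.
    generalize (proj2_sig (constructive_indefinite_description _ (Hl g))).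
    generalize (proj1_sig (constructive_indefinite_description _ (Hl g))). intros m [Hub _].
    assert (- lcost l <= m) by (apply Hub; exists l; auto). lra.
  - intros g c Hc.
    revert Hc.
    generalize (proj2_sig (constructive_indefinite_description _ (Hl g))).
    generalize (proj1_sig (constructive_indefinite_description _ (Hl g))). intros m [Hub Hlub] Hc.
    apply NNPP. intros Hn.
    assert (m <= - c).
    { apply Hlub. intros r [l [Hv [Hp ->]]].
      destruct (Rle_lt_dec c (lcost l)); [lra|]. exfalso; apply Hn; exists l; auto. }
    lra.
Qed.

Lemma inv_l_gen {G} (op : G->G->G) inv e
  (assoc : forall x y z, op (op x y) z = op x (op y z)) (idl : forall x, op e x = x)
  (invl : forall x, op (inv x) x = e) (invr : forall x, op x (inv x) = e) x y :
  op x (op (inv x) y) = y.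
Proof. rewrite <- assoc, invr, idl; auto. Qed.

Lemma birkhoff_kakutani {G} op inv (e:G) T (HG : is_topological_group op inv e T)
  (Hm : metrizable T) :
  exists d, is_metric d /\ compatible d T /\ left_invariant op d.
Proof.
  destruct Hm as [d0 [Hd0 Hc0]].
  destruct (nbd_base op inv e T HG d0 Hd0 Hc0) as
    [V [HVo [HVe [HV0 [Hmono [H3 [Hint Hbase]]]]]]].
  pose proof HG as [assoc [idl [idr [invl [invr [HT [Hcont Hinv]]]]]]].
  destruct (N_exists op e V HV0 idr) as [N [Nle Nlt]].
  assert (Npos : forall g, 0 <= N g).
  { intros g. destruct (Rle_lt_dec 0 (N g)); auto.
    destruct (Nlt g 0 r) as [l [_ [_ Hl]]]. pose proof (lcost_nonneg l); lra. }
  assert (Ne : N e = 0).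
  { pose proof (Nle e [] (Forall_nil _) eq_refl). simpl in H. pose proof (Npos e); lra. }
  assert (Nsub : forall g h, N (op g h) <= N g + N h).
  { intros g h. apply Rnot_lt_le. intros Hlt.
    set (del := N (op g h) - N g - N h).
    destruct (Nlt g (N g + del/2)) as [l1 [Hv1 [Hp1 Hc1]]]; [unfold del; lra|].
    destruct (Nlt h (N h + del/2)) as [l2 [Hv2 [Hp2 Hc2]]]; [unfold del; lra|].
    assert (N (op g h) <= lcost (l1 ++ l2)).
    { apply Nle. - apply Forall_app; auto. - rewrite lprod_app; subst; auto. }
    rewrite lcost_app in H. unfold del in *; lra. }
  assert (Nsmall : forall g n, N g < (/2)^n -> V n g).
  { intros g n Hn. destruct (Nlt g _ Hn) as [l [Hv [Hp Hc]]]. subst g.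
    apply frink; auto. }
  assert (Nbig : forall g n, V n g -> N g <= (/2)^n).
  { intros g n Hg. pose proof (Nle g [(g,n)]). simpl in H.
    rewrite Rplus_0_r in H. apply H; [constructor; [auto|constructor]| apply idr]. }
  pose proof (inv_l_gen op inv e assoc idl invl invr) as ilg.
  assert (mulinv : forall x y z, op (op (inv x) y) (op (inv y) z) = op (inv x) z).
  { intros x y z. rewrite assoc, ilg; auto. }
  exists (fun x y => N (op (inv x) y) + N (op (inv y) x)).
  split; [|split].
  - split; [|split; [|split]].
    + intros x y. pose proof (Npos (op (inv x) y)); pose proof (Npos (op (inv y) x)); lra.
    + intros x y; split.
      * intros H. pose proof (Npos (op (inv x) y)); pose proof (Npos (op (inv y) x)).
        assert (Hz : op (inv x) y = e).
        { apply Hint. intros n. apply Nsmall. pose proof (half_pow_pos n). lra. }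
        rewrite <- (ilg x y), Hz, idr; auto.
      * intros ->. rewrite invl, Ne; lra.
    + intros x y; lra.
    + intros x y z. pose proof (Nsub (op (inv x) y) (op (inv y) z)).
      pose proof (Nsub (op (inv z) y) (op (inv y) x)). rewrite !mulinv in *. lra.
  - intros U; split.
    + intros HU x Hx.
      assert (U (op x e)) by (rewrite idr; auto).
      destruct (Hcont U HU x e H) as [A [B [_ [HB [Ax [Be HAB]]]]]].
      destruct (Hbase B HB Be) as [n Hn].
      exists ((/2)^n); split; [apply half_pow_pos|].
      intros y Hy. pose proof (Npos (op (inv y) x)).
      rewrite <- (ilg x y).
      apply HAB; auto. apply Hn. apply Nsmall. lra.
    + intros HU. apply open_of_local; auto. intros x Hx.
      destruct (HU x Hx) as [eps [Heps Hb]].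
      destruct (small_pow (eps/2)) as [n Hn]; [lra|].
      exists (fun y => V n (op (inv x) y) /\ (fun z => V n (op z x)) (inv y)).
      split; [|split].
      * apply open_inter; auto.
        -- apply (open_ltrans op inv e T HG); auto.
        -- apply (Hinv (fun z => V n (op z x))). apply (open_rtrans op inv e T HG); auto.
      * rewrite invl; auto.
      * intros z [H1 H2]. apply Hb. apply Nbig in H1. apply Nbig in H2. lra.
  - intros g x y.
    assert (Hk : forall a b, op (inv (op g a)) (op g b) = op (inv a) b).
    { intros a b. replace (op g b) with (op (op g a) (op (inv a) b)).
      - rewrite <- assoc, invl, idl; auto.
      - rewrite assoc, ilg; auto. }
    rewrite !Hk; auto.
Qed.
Theorem theorem2p4 (G : Type) (op : G -> G -> G) (inv : G -> G) (e : G)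
    (T : set G -> Prop)
    (HG : is_topological_group op inv e T) (Hm : metrizable T) :
  Smirnov_Sc_Onbd_O op e T <->
  (forall d : G -> G -> R, is_metric d -> compatible d T ->
     left_invariant op d -> finitary_Haver T d).
Proof.
  pose proof HG as [assoc [idl [idr [invl [invr [HT [Hcont Hinv]]]]]]].
  split.
  - intros HS d Hd Hc Hli eps Heps.
    destruct (HS (fun n y => d e y < eps n / 3)) as [k [B [HB Hcov]]].
    { intros n. split.
      - apply Hc. apply ball_open; auto.
      - destruct Hd as [_ [H0 _]]. assert (d e e = 0) by (apply H0; auto).
        simpl. rewrite H. specialize (Heps n). lra. }
    exists k, B. split; auto.
    intros n Hn. destruct (HB n Hn) as [Ho [Hpd Hr]]. split; [auto|split; auto].
    intros W HW. destruct (Hr W HW) as [W' [[x ->] HWW]].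
    exists (2 * eps n / 3). split; [specialize (Heps n); lra|].
    intros a b Ha Hb. destruct (HWW a Ha) as [u [Hu ->]]. destruct (HWW b Hb) as [v [Hv ->]].
    rewrite Hli. destruct Hd as [_ [_ [Hsym Htri]]].
    pose proof (Htri u e v). rewrite (Hsym u e) in H. lra.
  - intros HH U HU.
    destruct (birkhoff_kakutani op inv e T HG Hm) as [d [Hd [Hc Hli]]].
    assert (He : forall n, exists eps, 0 < eps /\ forall y, d e y < eps -> U n y).
    { intros n. destruct (HU n) as [HUo HUe]. apply Hc in HUo. apply HUo; auto. }
    set (eps := fun n => proj1_sig (constructive_indefinite_description _ (He n))).
    assert (Heps : forall n, 0 < eps n /\ forall y, d e y < eps n -> U n y).
    { intros n. exact (proj2_sig (constructive_indefinite_description _ (He n))). }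
    destruct (HH d Hd Hc Hli eps (fun n => proj1 (Heps n))) as [k [B [HB Hcov]]].
    exists k, B. split; auto.
    intros n Hn. destruct (HB n Hn) as [Ho [Hpd Hdiam]]. split; [auto|split; auto].
    intros W HW. destruct (classic (exists w, W w)) as [[w Hw]|Hne].
    + exists (ltrans op w (U n)). split; [exists w; auto|].
      intros z Hz. exists (op (inv w) z). split.
      * apply (proj2 (Heps n)). destruct (Hdiam W HW) as [r [Hr Hdr]].
        rewrite <- (invl w), Hli. pose proof (Hdr w z Hw Hz). lra.
      * rewrite <- assoc, invr, idl; auto.
    + exists (ltrans op e (U n)). split; [exists e; auto|].
      intros z Hz. exfalso; apply Hne; eauto.
Qed.
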